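(* Let $\mathbb M^{n+1}$ be Minkowski space with form $\langle-,-\rangle$ of signature $-+\dots+$, let $c>0$, and let $\mathcal K^c=\{x\in\mathbb M^{n+1}:\langle x,x\rangle=-c^2,\ x \text{ future-oriented}\}$ with the Riemannian metric induced by $\langle-,-\rangle$ (a hyperbolic space of curvature $-1/c^2$), so that $T_p\mathcal K^c=p^\perp$ with the inner product $\langle-,-\rangle|_{p^\perp}$. Fix $p\in\mathcal K^c$. For $w\in T_p\mathcal K^c$ put $v(w):=c\tanh(|w|/c)\,\frac{w}{|w|}$ ($v(0)=0$); this is a bijection from $T_p\mathcal K^c$ onto the open ball $\mathcal V_p=\{u\in p^\perp:\langle u,u\rangle<c^2\}$. For $w_1,w_2\in T_p\mathcal K^c$, let $q:=\exp_p w_1$, let $w_2'\in T_q\mathcal K^c$ be the parallel transport of $w_2$ along the geodesic segment from $p$ to $q$, let $r:=\exp_q w_2'$, and define $w_1\oplus w_2:=\exp_p^{-1}r$. For $v_1,v_2\in\mathcal V_p$ with $v_i=v(w_i)$ define $v_1\oplus v_2:=v(w_1\oplus w_2)$. Then $v_1\oplus v_2$ equals the Einstein relativistic velocity sum $$v_1\oplus v_2=\frac{1}{1+\frac{\langle v_1,v_2\rangle}{c^2}}\left(v_1+\frac{v_2}{\gamma_{v_1}}+\frac{1}{c^2}\,\frac{\gamma_{v_1}}{1+\gamma_{v_1}}\langle v_1,v_2\rangle\, v_1\right),\qquad \gamma_{v_1}=\Big(1-\frac{\langle v_1,v_1\rangle}{c^2}\Big)^{-1/2}.$$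
   Context: $\exp$ denotes the Riemannian exponential map of $\mathcal K^c$ and $|w|=\sqrt{\langle w,w\rangle}$ for $w\in p^\perp$. The velocity $v(w)$ is the relative velocity (as measured by $p$) of the inertial observer $\exp_p w$; the Einstein sum $v_1\oplus v_2$ is the velocity, relative to $p$, of an object moving with velocity $v_2$ relative to a frame that moves with velocity $v_1$ relative to $p$ (frames related by a pure boost). *)

(* Defs.v *)
From HB Require Import structures.
From mathcomp Require Import all_boot all_order all_algebra.
From mathcomp Require Import all_classical all_reals all_analysis.
Set Implicit Arguments. Unset Strict Implicit. Unset Printing Implicit Defensive.
Import Order.TTheory GRing.Theory Num.Theory.
Import numFieldNormedType.Exports.
Local Open Scope ring_scope.

Section Minkowski.
Variables (R : realType) (n : nat).

(* Minkowski space M^{n+1}: row vectors with n+1 coordinates, coordinate 0 = time. *)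
Definition vec := 'rV[R]_(n.+1).

Definition mink (x y : vec) : R :=
  \sum_(i < n.+1) (if i == ord0 then -1 else 1) * (x ord0 i * y ord0 i).

Definition onK (c : R) (x : vec) : Prop := mink x x = - c ^+ 2 /\ 0 < x ord0 ord0.

Definition mnorm (w : vec) : R := Num.sqrt (mink w w).

(* geodesic of K^c (w.r.t. induced metric): a C^2 curve in K^c whose ambient
   acceleration is normal to K^c, i.e. proportional to the position vector
   (T_x K^c = x^perp, normal line = span x). *)
Definition geodesic (c : R) (g : R -> vec) : Prop :=
  forall t : R, onK c (g t) /\ derivable g t 1 /\ derivable ('D_1 g) t 1 /\
    exists k : R, 'D_1 ('D_1 g) t = k *: g t.

(* parallel vector field along a curve g in K^c (Levi-Civita connection of the
   induced metric): tangent at each point, ambient derivative normal. *)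
Definition parallel_along (g : R -> vec) (V : R -> vec) : Prop :=
  forall t : R, mink (g t) (V t) = 0 /\ derivable V t 1 /\
    exists k : R, 'D_1 V t = k *: g t.

Definition expRel (c : R) (p w q : vec) : Prop :=
  exists g : R -> vec, geodesic c g /\ g 0 = p /\ 'D_1 g 0 = w /\ g 1 = q.

Definition transportRel (c : R) (p w1 w2 w2' : vec) : Prop :=
  exists (g : R -> vec) (V : R -> vec), geodesic c g /\ g 0 = p /\ 'D_1 g 0 = w1 /\
    parallel_along g V /\ V 0 = w2 /\ V 1 = w2'.

Definition tanhR (x : R) : R := (expR x - expR (- x)) / (expR x + expR (- x)).

Definition vel (c : R) (w : vec) : vec :=
  if w == 0 then 0 else (c * tanhR (mnorm w / c) / mnorm w) *: w.

Definition lorentz_gamma (c : R) (v : vec) : R :=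
  (Num.sqrt (1 - mink v v / c ^+ 2))^-1.

Definition einstein_add (c : R) (v1 v2 : vec) : vec :=
  (1 + mink v1 v2 / c ^+ 2)^-1 *:
    (v1 + (lorentz_gamma c v1)^-1 *: v2 +
     ((c ^+ 2)^-1 * (lorentz_gamma c v1 / (1 + lorentz_gamma c v1)) * mink v1 v2) *: v1).

End Minkowski.

(* Main.v *)
Require Import Defs.
From HB Require Import structures.
From mathcomp Require Import all_boot all_order all_algebra.
From mathcomp Require Import all_classical all_reals all_analysis.
From mathcomp Require Import ring lra.
Import Order.TTheory GRing.Theory Num.Theory.
Import numFieldNormedType.Exports.
Local Open Scope ring_scope.

Section H.
Local Open Scope classical_set_scope.
Context {R : realType} {n : nat}.
Local Notation vec := (vec R n).

Lemma is_derive_scal_vec (f : R -> R) (t df : R) (v : vec) :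
  is_derive t 1 f df -> is_derive t 1 (fun s => f s *: v) (df *: v).
Proof.
move=> [df1 <-].
have H : (fun h : R => h^-1 *: (((fun s => f s *: v) \o shift t) (h *: 1) - f t *: v))
   = (fun h => (h^-1 *: ((f \o shift t) (h *: 1) - f t)) *: v).
  by apply/funext => h /=; rewrite -scalerBl scalerA.
have C : (fun h : R => h^-1 *: (((fun s => f s *: v) \o shift t) (h *: 1) - f t *: v)) @ 0^' --> 'D_1 f t *: v.
  by rewrite H; apply: cvgZr_tmp; exact: df1.
apply: DeriveDef; first exact: (cvgP _ C).
exact: cvg_lim C.
Qed.

Lemma coord_is_derive (g : R -> vec) t i : derivable g t 1 ->
  is_derive t 1 (fun s => g s ord0 i) ('D_1 g t ord0 i).
Proof.
move=> dg.
have C := cvg_comp _ _ dg (@coord_continuous R 1 n.+1 ord0 i ('D_1 g t)).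
have C' : (fun h : R => h^-1 *: (((fun s => g s ord0 i) \o shift t) (h *: 1) - g t ord0 i)) @ 0^' --> 'D_1 g t ord0 i.
  have -> : (fun h : R => h^-1 *: (((fun s => g s ord0 i) \o shift t) (h *: 1) - g t ord0 i)) =
    (fun M : vec => M ord0 i) \o (fun h : R => h^-1 *: ((g \o shift t) (h *: 1) - g t)).
    by apply/funext => h /=; rewrite !mxE.
  exact: C.
clear C; move: C' => C.
apply: DeriveDef; first exact: (cvgP _ C).
exact: cvg_lim C.
Qed.

End H.
Arguments coord_is_derive {R n g t} i.

Section H.
Local Open Scope classical_set_scope.
Context {R : realType} {n : nat}.
Local Notation vec := (vec R n).

Lemma mink_is_derive (f h : R -> vec) t : derivable f t 1 -> derivable h t 1 ->
  is_derive t 1 (fun s => mink (f s) (h s))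
    (mink ('D_1 f t) (h t) + mink (f t) ('D_1 h t)).
Proof.
move=> df dh.
have -> : (fun s => mink (f s) (h s)) =
   \sum_(i < n.+1) (fun s => (if i == ord0 then -1 else 1) * (f s ord0 i * h s ord0 i)).
  by rewrite fct_sumE; apply/funext => s.
have -> : mink ('D_1 f t) (h t) + mink (f t) ('D_1 h t) =
  \sum_(i < n.+1) ((if i == ord0 then -1 else 1) *
      (f t ord0 i * 'D_1 h t ord0 i + h t ord0 i * 'D_1 f t ord0 i)).
  rewrite /mink -big_split /=; apply: eq_bigr => i _; lra.
apply: is_derive_sum => i.
have Hf := coord_is_derive i df.
have Hh := coord_is_derive i dh.
have := @is_deriveM R R^o (fun s => f s ord0 i) (fun s => h s ord0 i) t 1 _ _ Hf Hh.
move=> HM.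
have := @is_deriveZ R R^o R^o _ (if i == ord0 then -1 else 1) t 1 _ HM.
move=> HZ; apply: (is_derive_eq HZ) => /=.
by [].

Qed.

End H.
Arguments mink_is_derive {R n f h t}.

Section H.
Local Open Scope classical_set_scope.
Context {R : realType}.

Definition chf (b t : R) : R := (expR (b * t) + expR (- (b * t))) / 2.
Definition snf (b t : R) : R :=
  if b == 0 then t else (expR (b * t) - expR (- (b * t))) / (2 * b).
Definition Tf (b t : R) : R :=
  if b == 0 then t ^+ 2 / 2 else (chf b t - 1) / b ^+ 2.

Lemma is_derive_expM (b t : R) :
  is_derive t 1 (fun s : R => expR (b * s)) (b * expR (b * t)).
Proof.
have H1 : is_derive t 1 (fun s : R => b * s) b.
  have H := @is_deriveZ R R^o R^o id b t 1 1 (is_derive_id _ _).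
  have -> : (fun s : R => b * s) = b \*: (id : R^o -> R^o) by apply/funext.
  by apply: (is_derive_eq H); rewrite /GRing.scale /= mulr1.
have := @is_derive1_comp R expR (fun s : R => b * s) t (expR (b * t)) b _ H1.
move=> H; rewrite mulrC.
have -> : (fun s : R => expR (b * s)) = expR \o (fun s : R => b * s) by [].
exact: H (is_derive_expR _).
Qed.

Lemma is_derive_expNM (b t : R) :
  is_derive t 1 (fun s : R => expR (- (b * s))) (- b * expR (- (b * t))).
Proof.
have H := is_derive_expM (- b) t.
have E : (fun s : R => expR (- b * s)) = (fun s : R => expR (- (b * s))).
  by apply/funext => s; rewrite mulNr.
rewrite E in H. rewrite !mulNr in H. by rewrite mulNr.
Qed.

Lemma chf_derive (b t : R) : is_derive t 1 (chf b) (b ^+ 2 * snf b t).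
Proof.
have H := is_deriveD (is_derive_expM b t) (is_derive_expNM b t).
have H2 := @is_deriveZ R R^o R^o _ (2^-1) t 1 _ H.
have -> : chf b = 2^-1 \*: ((fun s : R => expR (b * s)) + (fun s : R => expR (- (b * s)))).
  by apply/funext => s; rewrite /chf /= /GRing.scale /= mulrC.
apply: (is_derive_eq H2); rewrite /snf /GRing.scale /=.
case: eqP => [->|b0]; first by rewrite !mul0r oppr0 expR0; ring.
by field; apply/eqP.
Qed.

Lemma snf_derive (b t : R) : is_derive t 1 (snf b) (chf b t).
Proof.
case: (eqVneq b 0) => [->|b0].
  have -> : snf 0 = id by apply/funext => s; rewrite /snf eqxx.
  by apply: (is_derive_eq (is_derive_id t 1)); rewrite /chf mul0r oppr0 expR0; field.
have H := is_deriveB (is_derive_expM b t) (is_derive_expNM b t).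
have H2 := @is_deriveZ R R^o R^o _ ((2 * b)^-1) t 1 _ H.
have -> : snf b = (2 * b)^-1 \*: ((fun s : R => expR (b * s)) - (fun s : R => expR (- (b * s)))).
  by apply/funext => s; rewrite /snf (negPf b0) /= /GRing.scale /= mulrC.
apply: (is_derive_eq H2); rewrite /chf /GRing.scale /=.
by field; rewrite b0.
Qed.

Lemma Tf_derive (b t : R) : is_derive t 1 (Tf b) (snf b t).
Proof.
case: (eqVneq b 0) => [->|b0].
  have -> : Tf 0 = (2^-1) \*: (fun s : R => s ^+ 2).
    by apply/funext => s; rewrite /Tf eqxx /GRing.scale /= mulrC.
  have H := @is_deriveX R R^o id 2 t 1 1 (is_derive_id _ _).
  have H2 := @is_deriveZ R R^o R^o _ (2^-1) t 1 _ H.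
  by apply: (is_derive_eq H2); rewrite /snf eqxx /GRing.scale /=; field.
have H := is_deriveB (chf_derive b t) (is_derive_cst (1 : R^o) t 1).
have H2 := @is_deriveZ R R^o R^o _ ((b ^+ 2)^-1) t 1 _ H.
have -> : Tf b = (b ^+ 2)^-1 \*: (chf b - cst 1).
  by apply/funext => s; rewrite /Tf (negPf b0) /= /GRing.scale /= mulrC.
apply: (is_derive_eq H2); rewrite /GRing.scale /= subr0.
by field; rewrite b0.
Qed.

Lemma chf0 (b : R) : chf b 0 = 1.
Proof. by rewrite /chf mulr0 oppr0 expR0; field. Qed.
Lemma snf0 (b : R) : snf b 0 = 0.
Proof. rewrite /snf; case: eqP => // _; by rewrite mulr0 oppr0 subrr mul0r. Qed.
Lemma Tf0 (b : R) : Tf b 0 = 0.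
Proof. rewrite /Tf chf0; case: eqP => _; [by rewrite expr0n /= mul0r | by rewrite subrr mul0r]. Qed.

Lemma chf_gt0 (b t : R) : 0 < chf b t.
Proof. by rewrite /chf divr_gt0 // addr_gt0 // expR_gt0. Qed.

Lemma chf_snf (b t : R) : chf b t ^+ 2 - b ^+ 2 * snf b t ^+ 2 = 1.
Proof.
rewrite /chf /snf; case: eqP => [->|b0].
  by rewrite mul0r oppr0 expR0; field.
rewrite expRN.
have E0 : expR (b * t) != 0 by rewrite gt_eqF // expR_gt0.
by field; rewrite E0; apply/andP; split => //; apply/eqP.
Qed.

End H.

Section H.
Context {R : realType} {n : nat}.
Local Notation vec := (vec R n).

Definition sp (x y : vec) : R := \sum_(i < n) x ord0 (lift ord0 i) * y ord0 (lift ord0 i).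

Lemma mink_split (x y : vec) : mink x y = - (x ord0 ord0 * y ord0 ord0) + sp x y.
Proof.
rewrite /mink big_ord_recl eqxx mulN1r; congr (_ + _).
apply: eq_bigr => i _; by rewrite eq_sym (negPf (neq_lift _ _)) mul1r.
Qed.

Lemma sp_ineq (x y : vec) (a l : R) : 0 < l ->
  2 * a * sp x y <= l * a ^+ 2 * sp x x + sp y y / l.
Proof.
move=> l0; rewrite /sp !mulr_sumr mulr_suml -big_split /=.
apply: ler_sum => i _.
set u := x ord0 _; set v := y ord0 _.
have H : 0 <= (l * a * u - v) ^+ 2 / l by rewrite divr_ge0 // ?sqr_ge0 // ltW.
have E : l * a ^+ 2 * (u * u) + v * v / l - 2 * a * (u * v) = (l * a * u - v) ^+ 2 / l.
  by field; rewrite gt_eqF.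
by rewrite -subr_ge0 E.
Qed.

Lemma sp_ge0 (x : vec) : 0 <= sp x x.
Proof. by rewrite /sp sumr_ge0 // => i _; rewrite -expr2 sqr_ge0. Qed.

Lemma tangent_ineq (c : R) (p w : vec) : 0 < c -> onK c p -> mink p w = 0 ->
  c ^+ 2 * w ord0 ord0 ^+ 2 <= p ord0 ord0 ^+ 2 * mink w w.
Proof.
move=> c0 [hp p0] hw.
rewrite mink_split in hp; rewrite mink_split in hw; rewrite mink_split.
have pi0 : 0 < (p ord0 ord0)^-1 by rewrite invr_gt0.
have := @sp_ineq p w (w ord0 ord0) _ pi0.
set P := sp p p in hp *; set W := sp w w; set s := sp p w in hw *.
have -> : s = p ord0 ord0 * w ord0 ord0 by lra.
have -> : P = p ord0 ord0 ^+ 2 - c ^+ 2 by rewrite expr2; lra.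
rewrite invrK => H.
have E : p ord0 ord0 ^+ 2 * (- (w ord0 ord0 * w ord0 ord0) + W) - c ^+ 2 * w ord0 ord0 ^+ 2
   = p ord0 ord0 * ((p ord0 ord0)^-1 * w ord0 ord0 ^+ 2 * (p ord0 ord0 ^+ 2 - c ^+ 2) + W * p ord0 ord0
       - 2 * w ord0 ord0 * (p ord0 ord0 * w ord0 ord0)).
  by field; rewrite gt_eqF.
rewrite -subr_ge0 E mulr_ge0 //; [exact: ltW | lra].
Qed.

Lemma tangent_ge0 (c : R) (p w : vec) : 0 < c -> onK c p -> mink p w = 0 ->
  0 <= mink w w.
Proof.
move=> c0 hp hw; have := @tangent_ineq _ _ _ c0 hp hw.
have p0 := hp.2.
move=> H; have : 0 <= p ord0 ord0 ^+ 2 * mink w w.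
  by apply: le_trans H; rewrite mulr_ge0 // ?sqr_ge0.
by rewrite pmulr_rge0 // exprn_gt0.
Qed.

Lemma tangent_eq0 (c : R) (p w : vec) : 0 < c -> onK c p -> mink p w = 0 ->
  mink w w = 0 -> w = 0.
Proof.
move=> c0 hp hw h0; have := @tangent_ineq _ _ _ c0 hp hw; rewrite h0 mulr0.
have : 0 <= c ^+ 2 * w ord0 ord0 ^+ 2 by rewrite mulr_ge0 // sqr_ge0.
move=> H1 H2.
have : c ^+ 2 * w ord0 ord0 ^+ 2 = 0 by apply/eqP; rewrite eq_le H2 H1.
move/eqP; rewrite mulf_eq0 expf_eq0 /= (gt_eqF c0) /= expf_eq0 /= => /eqP w0.
move: h0; rewrite mink_split w0 mul0r oppr0 add0r /sp => /eqP.
rewrite psumr_eq0; last by move=> i _; rewrite -expr2 sqr_ge0.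
move=> /allP H.
apply/matrixP => i j; rewrite mxE (ord1 i).
case: (unliftP ord0 j) => [k ->|->] //.
have := H k (mem_index_enum _); rewrite -expr2 sqrf_eq0 => /eqP ->; by [].
Qed.

Lemma timelike_lt0 (c : R) (x y : vec) : 0 < c -> onK c x -> onK c y -> mink x y < 0.
Proof.
move=> c0 [hx x0] [hy y0].
rewrite mink_split in hx; rewrite mink_split in hy; rewrite mink_split.
have := @sp_ineq x y 1 _ (divr_gt0 y0 x0).
set X := sp x x in hx *; set Y := sp y y in hy *; set s := sp x y.
have -> : X = x ord0 ord0 ^+ 2 - c ^+ 2 by rewrite expr2; lra.
have -> : Y = y ord0 ord0 ^+ 2 - c ^+ 2 by rewrite expr2; lra.
move=> H.
have E : y ord0 ord0 / x ord0 ord0 * 1 ^+ 2 * (x ord0 ord0 ^+ 2 - c ^+ 2) +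
      (y ord0 ord0 ^+ 2 - c ^+ 2) / (y ord0 ord0 / x ord0 ord0)
   = 2 * (x ord0 ord0 * y ord0 ord0) - c ^+ 2 * (y ord0 ord0 / x ord0 ord0 + x ord0 ord0 / y ord0 ord0).
  by field; rewrite !gt_eqF.
rewrite E in H.
have : 0 < c ^+ 2 * (y ord0 ord0 / x ord0 ord0 + x ord0 ord0 / y ord0 ord0).
  by rewrite mulr_gt0 ?exprn_gt0 // addr_gt0 // divr_gt0.
lra.
Qed.

End H.
Arguments tangent_ineq {R n c p w}.
Arguments tangent_ge0 {R n c p w}.
Arguments tangent_eq0 {R n c p w}.
Arguments timelike_lt0 {R n c x y}.

Section H.
Context {R : realType} {n : nat}.
Local Notation vec := (vec R n).

Lemma minkC (x y : vec) : mink x y = mink y x.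
Proof. by apply: eq_bigr => i _; rewrite (mulrC (x _ _)). Qed.

Lemma minkDl (x y z : vec) : mink (x + y) z = mink x z + mink y z.
Proof. rewrite /mink -big_split /=; apply: eq_bigr => i _; rewrite !mxE; ring. Qed.

Lemma minkZl (a : R) (x z : vec) : mink (a *: x) z = a * mink x z.
Proof. by rewrite /mink mulr_sumr; apply: eq_bigr => i _; rewrite !mxE; ring. Qed.

Lemma minkDr (x y z : vec) : mink z (x + y) = mink z x + mink z y.
Proof. by rewrite minkC minkDl !(minkC z). Qed.

Lemma minkZr (a : R) (x z : vec) : mink z (a *: x) = a * mink z x.
Proof. by rewrite minkC minkZl minkC. Qed.

Lemma mink0l (z : vec) : mink 0 z = 0.
Proof. by rewrite -(scale0r 0) minkZl mul0r. Qed.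
Lemma mink0r (z : vec) : mink z 0 = 0.
Proof. by rewrite minkC mink0l. Qed.

Definition lc (f h : R -> R) (u v : vec) : R -> vec := fun t => f t *: u + h t *: v.

Lemma lc_derive (f h : R -> R) (u v : vec) (t df dh : R) :
  is_derive t 1 f df -> is_derive t 1 h dh -> is_derive t 1 (lc f h u v) (df *: u + dh *: v).
Proof.
move=> Hf Hh.
have := is_deriveD (@is_derive_scal_vec R n f t df u Hf) (@is_derive_scal_vec R n h t dh v Hh).
by [].
Qed.

Arguments lc_derive {f h} u v {t df dh}.

Definition egeo (b : R) (p w : vec) := lc (chf b) (snf b) p w.

Lemma egeo_derive (b : R) (p w : vec) (t : R) :
  is_derive t 1 (egeo b p w) (snf b t *: (b ^+ 2 *: p) + chf b t *: w).
Proof.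
have := lc_derive p w (chf_derive b t) (snf_derive b t).
by rewrite scalerA mulrC.
Qed.

Lemma egeo_D1 (b : R) (p w : vec) : 'D_1 (egeo b p w) = lc (snf b) (chf b) (b ^+ 2 *: p) w.
Proof. by apply/funext => t; rewrite (@derive_val _ _ _ _ _ _ _ (egeo_derive b p w t)). Qed.

Lemma egeo_D1_derive (b : R) (p w : vec) (t : R) :
  is_derive t 1 (lc (snf b) (chf b) (b ^+ 2 *: p) w) (b ^+ 2 *: egeo b p w t).
Proof.
have := lc_derive (b ^+ 2 *: p) w (snf_derive b t) (chf_derive b t).
move=> H; apply: (is_derive_eq H).
by rewrite /egeo /lc scalerDr !scalerA [_ * b ^+ 2]mulrC.
Qed.

Lemma egeo0 (b : R) (p w : vec) : egeo b p w 0 = p.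
Proof. by rewrite /egeo /lc chf0 snf0 scale1r scale0r addr0. Qed.

Lemma egeo_D1_0 (b : R) (p w : vec) : 'D_1 (egeo b p w) 0 = w.
Proof. by rewrite (@derive_val _ _ _ _ _ _ _ (egeo_derive b p w 0)) chf0 snf0 scale1r scale0r add0r. Qed.

Lemma mnorm_sq {c : R} {p w : vec} : 0 < c -> onK c p -> mink p w = 0 ->
  mnorm w ^+ 2 = mink w w.
Proof. by move=> c0 hp hw; rewrite /mnorm sqr_sqrtr // (tangent_ge0 c0 hp hw). Qed.

Lemma egeo_onK (c : R) (p w : vec) (t : R) : 0 < c -> onK c p -> mink p w = 0 ->
  onK c (egeo (mnorm w / c) p w t).
Proof.
move=> c0 hp hw; set b := mnorm w / c.
have ww : mink w w = b ^+ 2 * c ^+ 2.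
  by rewrite -(mnorm_sq c0 hp hw) /b; field; rewrite gt_eqF.
have Hcs := chf_snf b t.
split.
  rewrite /egeo /lc !(minkDl, minkDr, minkZl, minkZr) hp.1 hw (minkC w p) hw ww.
  set C := chf b t in Hcs *; set S := snf b t in Hcs *.
  have E : C * C = 1 + b ^+ 2 * S ^+ 2 by rewrite -expr2; lra.
  rewrite !mulr0 !addr0 add0r mulrA E; ring.
have ti := tangent_ineq c0 hp hw.
rewrite ww in ti.
have p0 := hp.2.
rewrite /egeo /lc !mxE.
set C := chf b t in Hcs *; set S := snf b t in Hcs *.
have C0 : 0 < C by apply: chf_gt0.
clearbody C S.
set P := p ord0 ord0 in ti p0 *; set W := w ord0 ord0 in ti *.
have c2 : 0 < c ^+ 2 by rewrite exprn_gt0.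
have h1 : W ^+ 2 <= P ^+ 2 * b ^+ 2.
  rewrite -(ler_pM2l c2); move: ti.
  have -> : c ^+ 2 * (P ^+ 2 * b ^+ 2) = P ^+ 2 * (b ^+ 2 * c ^+ 2) by ring.
  by rewrite mulrC.
have h2 : (S * W) ^+ 2 < (C * P) ^+ 2.
  rewrite !exprMn; apply: (le_lt_trans (y := S ^+ 2 * (P ^+ 2 * b ^+ 2))).
    by rewrite ler_wpM2l // sqr_ge0.
  have : S ^+ 2 * (P ^+ 2 * b ^+ 2) = P ^+ 2 * (b ^+ 2 * S ^+ 2) by ring.
  move=> ->; rewrite [_ * P ^+ 2]mulrC ltr_pM2l ?exprn_gt0 //; lra.
have CP : 0 < C * P by rewrite mulr_gt0.
rewrite /GRing.scale /=.
nra.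
Qed.

Lemma egeo_geodesic (c : R) (p w : vec) : 0 < c -> onK c p -> mink p w = 0 ->
  geodesic c (egeo (mnorm w / c) p w).
Proof.
move=> c0 hp hw t; split; first exact: egeo_onK.
split; first exact: (egeo_derive _ _ _ t).(ex_derive).
rewrite egeo_D1; split; first exact: (egeo_D1_derive _ _ _ t).(ex_derive).
exists ((mnorm w / c) ^+ 2).
exact: (egeo_D1_derive _ _ _ t).(derive_val).
Qed.

End H.
Arguments lc_derive {R n f h} u v {t df dh}.

Section H.
Context {R : realType} {n : nat}.
Local Notation vec := (vec R n).

Lemma cst_derive0 {V : normedModType R} (f : R -> V) (t : R) (d k : V) :
  is_derive t 1 f d -> (forall s, f s = k) -> d = 0.
Proof.
move=> H Hk; have E : f = cst k by apply/funext => s; rewrite Hk.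
subst f; rewrite -(@derive_val _ _ _ _ _ _ _ H); exact: derive_cst.
Qed.

Lemma ode_uniq (b : R) (u u' : R -> R) :
  (forall t : R, is_derive t 1 u (u' t)) -> (forall t : R, is_derive t 1 u' (b ^+ 2 * u t)) ->
  u 0 = 0 -> u' 0 = 0 -> forall t : R, u t = 0.
Proof.
move=> Hu Hu' u0 u'0.
have F (t : R) : expR (b * t) * (u' t - b * u t) = 0.
  have HF : forall s : R, is_derive s 1 ((fun s : R => expR (b * s)) * (u' - b \*: u)) 0.
    move=> s.
    have H1 := is_deriveB (Hu' s) (@is_deriveZ R R^o R^o u b s 1 _ (Hu s)).
    have H2 := @is_deriveM R R^o _ _ s 1 _ _ (is_derive_expM b s) H1.
    apply: (is_derive_eq H2).
    have -> : (u' - b \*: u) s = u' s - b * u s by []. rewrite /GRing.scale /=; ring.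
  have := is_derive_0_is_cst t 0 HF.
  move=> E; have -> : expR (b * t) * (u' t - b * u t) = ((fun s : R => expR (b * s)) * (u' - b \*: u)) t by [].
  rewrite E; have -> : ((fun s : R => expR (b * s)) * (u' - b \*: u)) 0 = expR (b * 0) * (u' 0 - b * u 0) by [].
  by rewrite u0 u'0 mulr0 subrr mulr0.
have G (t : R) : expR (- (b * t)) * u t = 0.
  have HG : forall s : R, is_derive s 1 ((fun s : R => expR (- (b * s))) * u) 0.
    move=> s.
    have H2 := @is_deriveM R R^o _ _ s 1 _ _ (is_derive_expNM b s) (Hu s).
    apply: (is_derive_eq H2); rewrite /GRing.scale /=.
    have := F s; move/eqP; rewrite mulf_eq0 gt_eqF ?expR_gt0 //= subr_eq0 => /eqP ->.
    ring.
  have := is_derive_0_is_cst t 0 HG.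
  move=> E; have -> : expR (- (b * t)) * u t = ((fun s : R => expR (- (b * s))) * u) t by [].
  rewrite E; have -> : ((fun s : R => expR (- (b * s))) * u) 0 = expR (- (b * 0)) * u 0 by [].
  by rewrite u0 mulr0.
move=> t; have := G t; move/eqP; rewrite mulf_eq0 gt_eqF ?expR_gt0 //=.
by move/eqP.
Qed.

End H.
Arguments cst_derive0 {R V f t d} k.
Arguments ode_uniq {R b u u'}.

Section H.
Context {R : realType} {n : nat}.
Local Notation vec := (vec R n).

Lemma geo_orth (c : R) (g : R -> vec) (t : R) : geodesic c g ->
  mink (g t) ('D_1 g t) = 0.
Proof.
move=> G.
have dg s : derivable g s 1 by have [_ [? _]] := G s.
have H := mink_is_derive (dg t) (dg t).
have := cst_derive0 (- c ^+ 2) H (fun s => (G s).1.1).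
rewrite minkC => /eqP; rewrite -mulr2n mulrn_eq0 /= => /eqP //.
Qed.

Lemma geo_unique (c : R) (p w : vec) (g : R -> vec) : 0 < c -> onK c p -> mink p w = 0 ->
  geodesic c g -> g 0 = p -> 'D_1 g 0 = w -> forall t, g t = egeo (mnorm w / c) p w t.
Proof.
move=> c0 hp hw G g0 g'0.
set b := mnorm w / c.
have dg s : derivable g s 1 by have [_ [? _]] := G s.
have ddg s : derivable ('D_1 g) s 1 by have [_ [_ [? _]]] := G s.
have [k Hk] := boolp.choice (fun s => (G s).2.2.2).
have onk s : onK c (g s) by have [] := G s.
have c2 : c ^+ 2 != 0 by rewrite expf_neq0 // gt_eqF.
have B s : mink ('D_1 g s) ('D_1 g s) = k s * c ^+ 2.
  have H := mink_is_derive (dg s) (ddg s).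
  have := cst_derive0 (0) H (fun s => geo_orth c g s G).
  by rewrite Hk minkZr (onk s).1 => /eqP; rewrite addr_eq0 => /eqP ->; ring.
have C s : mink ('D_1 g s) ('D_1 g s) = b ^+ 2 * c ^+ 2.
  have HC : forall s : R, is_derive s 1 (fun s : R => mink ('D_1 g s) ('D_1 g s)) 0.
    move=> s'; have H := mink_is_derive (ddg s') (ddg s').
    apply: (is_derive_eq H).
    by rewrite Hk minkZl minkZr (minkC ('D_1 g s')) (geo_orth c g s' G) !mulr0 addr0.
  rewrite (is_derive_0_is_cst s 0 HC) g'0 -(mnorm_sq c0 hp hw) /b.
  by field; rewrite gt_eqF.
have K s : k s = b ^+ 2.
  by apply: (mulIf c2); rewrite -B C.
move=> t; apply/matrixP => i j; rewrite (ord1 i) {i}.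
pose u := fun s => g s ord0 j - egeo b p w s ord0 j.
pose u' := fun s => 'D_1 g s ord0 j - 'D_1 (egeo b p w) s ord0 j.
have de (s : R) : derivable (egeo b p w) s 1 := (egeo_derive b p w s).(ex_derive).
have dde (s : R) : derivable ('D_1 (egeo b p w)) s 1.
  by rewrite egeo_D1; exact: (egeo_D1_derive b p w s).(ex_derive).
have Hu (s : R) : is_derive s 1 u (u' s).
  exact: is_deriveB (coord_is_derive j (dg s)) (coord_is_derive j (de s)).
have Hu' (s : R) : is_derive s 1 u' (b ^+ 2 * u s).
  have H := is_deriveB (coord_is_derive j (ddg s)) (coord_is_derive j (dde s)).
  apply: (is_derive_eq H).
  rewrite Hk K egeo_D1 (@derive_val _ _ _ _ _ _ _ (egeo_D1_derive b p w s)) !mxE /u.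
  by rewrite /egeo /lc !mxE; ring.
have u0 : u 0 = 0 by rewrite /u g0 egeo0 subrr.
have u'0 : u' 0 = 0 by rewrite /u' g'0 egeo_D1_0 subrr.
have E := ode_uniq Hu Hu' u0 u'0 t.
by apply/eqP; rewrite -subr_eq0; apply/eqP; exact: E.
Qed.

End H.
Arguments geo_orth {R n c g} t.
Arguments geo_unique {R n c p w g}.

Section H.
Context {R : realType} {n : nat}.
Local Notation vec := (vec R n).

Lemma expRel_eq (c : R) (p w q : vec) : 0 < c -> onK c p -> mink p w = 0 ->
  expRel c p w q -> q = egeo (mnorm w / c) p w 1.
Proof.
move=> c0 hp hw [g [G [g0 [g'0 g1]]]].
by rewrite -g1; apply: (geo_unique c0 hp hw G g0 g'0).
Qed.

Lemma expRel_ex (c : R) (p w : vec) : 0 < c -> onK c p -> mink p w = 0 ->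
  expRel c p w (egeo (mnorm w / c) p w 1).
Proof.
move=> c0 hp hw; exists (egeo (mnorm w / c) p w); split; first exact: egeo_geodesic.
by rewrite egeo0 egeo_D1_0.
Qed.

Definition ptr (c b : R) (p w1 w2 : vec) : R -> vec :=
  fun t => w2 + (mink w1 w2 / c ^+ 2) *: lc (snf b) (Tf b) p w1 t.

Lemma ptr_derive (c b : R) (p w1 w2 : vec) (t : R) :
  is_derive t 1 (ptr c b p w1 w2) ((mink w1 w2 / c ^+ 2) *: egeo b p w1 t).
Proof.
have H1 := lc_derive p w1 (snf_derive b t) (Tf_derive b t).
have H2 := @is_deriveZ R R^o vec _ (mink w1 w2 / c ^+ 2) t 1 _ H1.
have H3 := is_deriveD (is_derive_cst w2 t 1) H2.
apply: (is_derive_eq H3).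
by rewrite add0r.
Qed.

Lemma Tf_chf (b t : R) : b != 0 -> Tf b t * b ^+ 2 = chf b t - 1.
Proof. by move=> b0; rewrite /Tf (negPf b0); field. Qed.

Lemma b0_orth (c : R) (p w1 w2 : vec) : 0 < c -> onK c p -> mink p w1 = 0 ->
  mnorm w1 / c = 0 -> mink w1 w2 = 0.
Proof.
move=> c0 hp hw /eqP; rewrite mulf_eq0 invr_eq0 (gt_eqF c0) orbF => /eqP m0.
have : mink w1 w1 = 0 by rewrite -(mnorm_sq c0 hp hw) m0 expr0n.
by move/(tangent_eq0 c0 hp hw) ->; rewrite mink0l.
Qed.

Lemma ptr_parallel (c : R) (p w1 w2 : vec) : 0 < c -> onK c p -> mink p w1 = 0 ->
  mink p w2 = 0 ->
  parallel_along (egeo (mnorm w1 / c) p w1) (ptr c (mnorm w1 / c) p w1 w2).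
Proof.
move=> c0 hp hw1 hw2 t; set b := mnorm w1 / c.
split; last first.
  split; first exact: (ptr_derive c b p w1 w2 t).(ex_derive).
  by exists (mink w1 w2 / c ^+ 2); exact: (ptr_derive c b p w1 w2 t).(derive_val).
have ww : mink w1 w1 = b ^+ 2 * c ^+ 2.
  by rewrite -(mnorm_sq c0 hp hw1) /b; field; rewrite gt_eqF.
rewrite /ptr /egeo /lc !(minkDl, minkDr, minkZl, minkZr) hp.1 hw1 hw2 (minkC w1 p) hw1 ww.
case: (eqVneq b 0) => [b0|bn0].
  by rewrite (b0_orth c p w1 w2 c0 hp hw1 b0); ring.
have E := Tf_chf b t bn0.
set m := mink w1 w2.
transitivity (snf b t * m * (1 - chf b t + Tf b t * b ^+ 2)).
  by field; rewrite gt_eqF.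
by rewrite E; ring.
Qed.

Lemma ptr0 (c b : R) (p w1 w2 : vec) : ptr c b p w1 w2 0 = w2.
Proof. by rewrite /ptr /lc snf0 Tf0 !scale0r addr0 scaler0 addr0. Qed.

Lemma transport_eq (c : R) (p w1 w2 w2' : vec) : 0 < c -> onK c p -> mink p w1 = 0 ->
  transportRel c p w1 w2 w2' ->
  w2' = ptr c (mnorm w1 / c) p w1 w2 1 /\ mink (egeo (mnorm w1 / c) p w1 1) w2' = 0.
Proof.
move=> c0 hp hw1 [g [V [G [g0 [g'0 [PV [V0 V1]]]]]]].
set b := mnorm w1 / c.
have gE : g = egeo b p w1 by apply/funext => t; exact: (geo_unique c0 hp hw1 G g0 g'0).
rewrite gE in PV G; clear gE g0 g'0 g.
set e := egeo b p w1 in PV G *.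
have dV (s : R) : derivable V s 1 by have [_ [? _]] := PV s.
have [k Hk] := boolp.choice (fun s => (PV s).2.2).
have tang (s : R) : mink (e s) (V s) = 0 by have [] := PV s.
have de (s : R) : derivable e s 1 := (egeo_derive b p w1 s).(ex_derive).
have dde (s : R) : derivable ('D_1 e) s 1.
  by rewrite /e egeo_D1; exact: (egeo_D1_derive b p w1 s).(ex_derive).
have onk (s : R) : onK c (e s) by exact: egeo_onK.
have c2 : c ^+ 2 != 0 by rewrite expf_neq0 // gt_eqF.
have A (s : R) : mink ('D_1 e s) (V s) = k s * c ^+ 2.
  have H := mink_is_derive (de s) (dV s).
  have := cst_derive0 0 H tang.
  by rewrite Hk minkZr (onk s).1 => /eqP; rewrite addr_eq0 => /eqP ->; ring.
have Bc : forall s : R, is_derive s 1 (fun s : R => mink ('D_1 e s) (V s)) 0.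
  move=> s; have H := mink_is_derive (dde s) (dV s).
  apply: (is_derive_eq H).
  rewrite Hk /e egeo_D1 (@derive_val _ _ _ _ _ _ _ (egeo_D1_derive b p w1 s)).
  rewrite minkZl minkZr -/e (minkC ('D_1 e s)) (geo_orth s G).
  by rewrite tang !mulr0 addr0.
have K (s : R) : k s = mink w1 w2 / c ^+ 2.
  apply: (mulIf c2); rewrite -A (is_derive_0_is_cst s 0 Bc) /= V0 /e egeo_D1_0.
  by rewrite mulfVK.
have dp (s : R) := ptr_derive c b p w1 w2 s.
have VE : V 1 = ptr c b p w1 w2 1.
  apply/matrixP => i j; rewrite (ord1 i) {i}.
  pose u := fun s : R => V s ord0 j - ptr c b p w1 w2 s ord0 j.
  have Hu : forall s : R, is_derive s 1 u 0.
    move=> s0; have H := is_deriveB (coord_is_derive j (dV s0)) (coord_is_derive j (dp s0).(ex_derive)).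
    apply: (is_derive_eq H).
    by rewrite (dp s0).(derive_val) Hk K subrr.
  have := is_derive_0_is_cst 1 0 Hu.
  rewrite /u ptr0 V0 subrr => /eqP; rewrite subr_eq0 => /eqP; exact.
by rewrite -V1 VE; split => //; rewrite -VE tang.
Qed.

End H.

Section H.
Context {R : realType} {n : nat}.
Local Notation vec := (vec R n).

Lemma mnorm_gt0 {c : R} {p w : vec} : 0 < c -> onK c p -> mink p w = 0 -> w != 0 ->
  0 < mnorm w.
Proof.
move=> c0 hp hw wn0; rewrite /mnorm sqrtr_gt0 lt_def (tangent_ge0 c0 hp hw) andbT.
by apply/eqP => /(tangent_eq0 c0 hp hw) /eqP; rewrite (negPf wn0).
Qed.

Lemma vel_egeo {c : R} {p w : vec} : 0 < c -> onK c p -> mink p w = 0 ->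
  vel c w = (snf (mnorm w / c) 1 / chf (mnorm w / c) 1) *: w.
Proof.
move=> c0 hp hw; rewrite /vel; case: eqP => [->|/eqP wn0]; first by rewrite scaler0.
have m0 := mnorm_gt0 c0 hp hw wn0.
congr (_ *: _).
have b0 : mnorm w / c != 0 by rewrite mulf_neq0 ?invr_eq0 ?gt_eqF.
rewrite /snf (negPf b0) /chf /tanhR !mulr1.
set m := mnorm w.
have E1 : expR (m / c) + expR (- (m / c)) != 0 by rewrite gt_eqF // addr_gt0 // expR_gt0.
by field; rewrite E1 !gt_eqF.
Qed.

Lemma egeo_p {c : R} {p w : vec} b : onK c p -> mink p w = 0 ->
  mink p (egeo b p w 1) = - c ^+ 2 * chf b 1.
Proof.
by move=> hp hw; rewrite /egeo /lc minkDr !minkZr hp.1 hw mulr0 addr0 mulrC.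
Qed.

Lemma vel_from_r {c : R} {p w r : vec} : 0 < c -> onK c p -> mink p w = 0 ->
  r = egeo (mnorm w / c) p w 1 ->
  vel c w = (- c ^+ 2 / mink p r) *: r - p.
Proof.
move=> c0 hp hw ->; rewrite (vel_egeo c0 hp hw) (egeo_p _ hp hw).
set b := mnorm w / c.
have C0 := chf_gt0 b 1.
rewrite /egeo /lc scalerDr !scalerA.
have -> : - c ^+ 2 / (- c ^+ 2 * chf b 1) * chf b 1 = 1.
  by field; rewrite !gt_eqF.
rewrite scale1r addrC addKr; congr (_ *: _).
by field; rewrite !gt_eqF.
Qed.

Lemma ptr_norm {c : R} {p w1 w2 : vec} : 0 < c -> onK c p -> mink p w1 = 0 ->
  mink p w2 = 0 ->
  mink (ptr c (mnorm w1 / c) p w1 w2 1) (ptr c (mnorm w1 / c) p w1 w2 1) = mink w2 w2.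
Proof.
move=> c0 hp hw1 hw2; set b := mnorm w1 / c.
have ww : mink w1 w1 = b ^+ 2 * c ^+ 2.
  by rewrite -(mnorm_sq c0 hp hw1) /b; field; rewrite gt_eqF.
rewrite /ptr /lc !(minkDl, minkDr, minkZl, minkZr) hp.1 hw1 hw2 (minkC w1 p) hw1 ww
  (minkC w2 p) hw2 (minkC w2 w1).
case: (eqVneq b 0) => [b0|bn0].
  by rewrite (b0_orth c p w1 w2 c0 hp hw1 b0); ring.
have E := Tf_chf b 1 bn0.
have F := chf_snf b 1.
set m := mink w1 w2; set S := snf b 1 in F *; set T := Tf b 1 in E *; set C := chf b 1 in E F *.
transitivity (mink w2 w2 + m ^+ 2 / c ^+ 2 * (2 * T - S ^+ 2 + T ^+ 2 * b ^+ 2)).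
  by field; rewrite gt_eqF.
have -> : 2 * T - S ^+ 2 + T ^+ 2 * b ^+ 2 = 0.
  apply: (mulIf (_ : b ^+ 2 != 0)); first by rewrite expf_neq0.
  rewrite mul0r.
  have -> : (2 * T - S ^+ 2 + T ^+ 2 * b ^+ 2) * b ^+ 2
     = 2 * (T * b ^+ 2) - b ^+ 2 * S ^+ 2 + (T * b ^+ 2) ^+ 2 by ring.
  have S2 : b ^+ 2 * S ^+ 2 = C ^+ 2 - 1 by rewrite -[in RHS]F; ring.
  rewrite E S2; ring.
by rewrite mulr0 addr0.
Qed.

End H.

Section H.
Context {R : realType} {n : nat}.
Local Notation vec := (vec R n).

Lemma log_ex (c : R) (p r : vec) : 0 < c -> onK c p -> onK c r ->
  exists w, mink p w = 0 /\ egeo (mnorm w / c) p w 1 = r.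
Proof.
move=> c0 hp hr.
have c2 : 0 < c ^+ 2 by rewrite exprn_gt0.
have pr := timelike_lt0 c0 hp hr.
set C := - mink p r / c ^+ 2.
have C0 : 0 < C by rewrite /C divr_gt0 // oppr_gt0.
set x := r - C *: p.
have px : mink p x = 0.
  by rewrite /x minkDr -scaleNr minkZr hp.1 /C; field; rewrite gt_eqF.
have xx : mink x x = c ^+ 2 * (C ^+ 2 - 1).
  rewrite /x -scaleNr !(minkDl, minkDr, minkZl, minkZr) hr.1 hp.1 (minkC r p).
  by rewrite /C; field; rewrite gt_eqF.
have Cge : 0 <= C ^+ 2 - 1.
  have := tangent_ge0 c0 hp px; rewrite xx pmulr_rge0 //.
case: (eqVneq (C ^+ 2 - 1) 0) => [C1|C1].
  have x0 : x = 0 by apply: (tangent_eq0 c0 hp px); rewrite xx C1 mulr0.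
  have CC : C = 1.
    have : (C - 1) * (C + 1) = 0 by rewrite -C1; ring.
    move/eqP; rewrite mulf_eq0 => /orP [/eqP|/eqP]; first by move/eqP; rewrite subr_eq0 => /eqP.
    move=> h; have : C + 1 > 0 by rewrite addr_gt0. by rewrite h ltxx.
  exists 0; split; first by rewrite mink0r.
  have m0 : mnorm (0 : vec) = 0 by rewrite /mnorm mink0l sqrtr0.
  rewrite m0 mul0r /egeo /lc scaler0 addr0.
  have ch1 : chf 0 1 = 1 :> R by rewrite /chf mul0r oppr0 expR0; field.
  have : r = x + C *: p by rewrite /x subrK.
  by rewrite x0 CC add0r scale1r ch1 scale1r.
have Cgt : 0 < C ^+ 2 - 1 by rewrite lt_def C1 Cge.
set s := Num.sqrt (C ^+ 2 - 1).
have s0 : 0 < s by rewrite sqrtr_gt0.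
have ss : s ^+ 2 = C ^+ 2 - 1 by rewrite sqr_sqrtr // ltW.
have Cs0 : 0 < C - s.
  have : (C - s) * (C + s) = 1.
    have -> : (C - s) * (C + s) = C ^+ 2 - s ^+ 2 by ring.
    by rewrite ss; ring.
  have Cs : 0 < C + s by rewrite addr_gt0.
  nra.
have Cs1 : 1 < C + s by nra.
set be := ln (C + s).
have be0 : 0 < be by rewrite ln_gt0.
have ebe : expR be = C + s by rewrite lnK // posrE; lra.
have ebeN : expR (- be) = C - s.
  rewrite expRN ebe; apply: (mulIf (_ : C + s != 0)); first by rewrite gt_eqF //; lra.
  rewrite mulVf; last by rewrite gt_eqF //; lra.
  have -> : (C - s) * (C + s) = C ^+ 2 - s ^+ 2 by ring.
  by rewrite ss; ring.
exists ((be / s) *: x); split; first by rewrite minkZr px mulr0.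
have mw : mnorm ((be / s) *: x) = be * c.
  rewrite /mnorm minkZl minkZr xx -ss.
  have -> : be / s * (be / s * (c ^+ 2 * s ^+ 2)) = (be * c) ^+ 2.
    by field; rewrite gt_eqF.
  by rewrite sqrtr_sqr ger0_norm // mulr_ge0 // ltW.
rewrite mw mulfK ?gt_eqF // /egeo /lc /chf /snf (gt_eqF be0) !mulr1 ebe ebeN scalerA.
have -> : (C + s - (C - s)) / (2 * be) * (be / s) = 1 by field; rewrite !gt_eqF.
rewrite scale1r /x; have -> : (C + s + (C - s)) / 2 = C by field.
by rewrite addrC subrK.
Qed.

End H.

Theorem mainTheorem4 (R : realType) (n : nat) (c : R) (hc : 0 < c)
    (p : vec R n) (hp : onK c p) (w1 w2 : vec R n)
    (hw1 : mink p w1 = 0) (hw2 : mink p w2 = 0) :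
  (exists q w2' r w3 : vec R n,
      expRel c p w1 q /\ transportRel c p w1 w2 w2' /\ expRel c q w2' r /\
      mink p w3 = 0 /\ expRel c p w3 r) /\
  (forall q w2' r w3 : vec R n,
      expRel c p w1 q -> transportRel c p w1 w2 w2' -> expRel c q w2' r ->
      mink p w3 = 0 -> expRel c p w3 r ->
      vel c w3 = einstein_add c (vel c w1) (vel c w2)).
Proof.
set b1 := mnorm w1 / c.
have hq : onK c (egeo b1 p w1 1) by exact: egeo_onK.
split.
  set q := egeo b1 p w1 1.
  set w2' := ptr c b1 p w1 w2 1.
  have hqw : mink q w2' = 0 by exact: (ptr_parallel c p w1 w2 hc hp hw1 hw2 1).1.
  set r := egeo (mnorm w2' / c) q w2' 1.
  have hr : onK c r by exact: egeo_onK.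
  have [w3 [pw3 e3]] := log_ex c p r hc hp hr.
  exists q, w2', r, w3; split; first exact: expRel_ex.
  split.
    exists (egeo b1 p w1), (ptr c b1 p w1 w2); split; first exact: egeo_geodesic.
    split; first exact: egeo0.
    split; first exact: egeo_D1_0.
    split; first exact: ptr_parallel.
    by split; [exact: ptr0|].
  split; first exact: expRel_ex.
  split => //; rewrite -e3; exact: expRel_ex.
move=> q w2' r w3 Hq Ht Hr pw3 Hr3.
have qE := expRel_eq c p w1 q hc hp hw1 Hq.
have [tE tq] := transport_eq c p w1 w2 w2' hc hp hw1 Ht.
rewrite -qE in tq hq.
have rE := expRel_eq c q w2' r hc hq tq Hr.
have r3 := expRel_eq c p w3 r hc hp pw3 Hr3.
have hr : onK c r by rewrite rE; exact: egeo_onK.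
have prneg := timelike_lt0 hc hp hr.
rewrite (vel_from_r hc hp pw3 r3) (vel_egeo hc hp hw1) (vel_egeo hc hp hw2).
have m2 : mnorm w2' = mnorm w2 by rewrite /mnorm tE (ptr_norm hc hp hw1 hw2).
rewrite rE m2 qE tE in prneg *.
rewrite -/b1; set b2 := mnorm w2 / c.
have ww1 : mink w1 w1 = b1 ^+ 2 * c ^+ 2.
  by rewrite -(mnorm_sq hc hp hw1) /b1; field; rewrite gt_eqF.
have F1 := chf_snf b1 1.
have C1p := chf_gt0 b1 1; have C2p := chf_gt0 b2 1.
have gam : lorentz_gamma c ((snf b1 1 / chf b1 1) *: w1) = chf b1 1.
  rewrite /lorentz_gamma minkZl minkZr ww1.
  have -> : 1 - snf b1 1 / chf b1 1 * (snf b1 1 / chf b1 1 * (b1 ^+ 2 * c ^+ 2)) / c ^+ 2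
     = (chf b1 1)^-1 ^+ 2.
    transitivity ((chf b1 1 ^+ 2 - b1 ^+ 2 * snf b1 1 ^+ 2) / chf b1 1 ^+ 2); first by field; rewrite !gt_eqF.
    by rewrite F1; field; rewrite gt_eqF.
  by rewrite sqrtr_sqr ger0_norm ?invrK // invr_ge0 ltW.
rewrite /einstein_add gam !(minkZl, minkZr).
rewrite /egeo /ptr /lc in prneg *.
rewrite !(minkDr, minkZr) hp.1 hw1 hw2 in prneg *.
rewrite -/b1 -/b2 in prneg *.
move: F1 prneg; clear -hc C1p C2p hp hw1.
set C1 := chf b1 1; set S1 := snf b1 1; set T1 := Tf b1 1.
set C2 := chf b2 1; set S2 := snf b2 1; set m := mink w1 w2.
move=> F1 prneg.
have Mn0 : C2 * (C1 * - c ^+ 2 + S1 * 0) + S2 * (0 + m / c ^+ 2 * (S1 * - c ^+ 2 + T1 * 0)) != 0.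
  by rewrite lt_eqF.
have Dn0 : 1 + S1 / C1 * (S2 / C2 * m) / c ^+ 2 != 0.
  apply: contraNneq Mn0 => E.
  have -> : C2 * (C1 * - c ^+ 2 + S1 * 0) + S2 * (0 + m / c ^+ 2 * (S1 * - c ^+ 2 + T1 * 0))
     = - c ^+ 2 * C1 * C2 * (1 + S1 / C1 * (S2 / C2 * m) / c ^+ 2).
    by field; rewrite !gt_eqF.
  by rewrite E mulr0.
have C1n : 1 + C1 != 0 by rewrite gt_eqF // addr_gt0.
case: (eqVneq m 0) => [m0|mn0].
  rewrite m0 in Mn0 Dn0 *.
  apply/matrixP => i j; rewrite !mxE.
  by field; rewrite C1n !gt_eqF.
have b1n : b1 != 0.
  by apply/eqP => b0; move/eqP: mn0; apply; exact: (b0_orth c p w1 w2 hc hp hw1 b0).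
have TE : T1 = S1 ^+ 2 / (1 + C1).
  apply: (mulIf (_ : b1 ^+ 2 != 0)); first by rewrite expf_neq0.
  rewrite /T1 Tf_chf // -/C1.
  have S2E : b1 ^+ 2 * S1 ^+ 2 = C1 ^+ 2 - 1 by rewrite -[in RHS]F1; ring.
  transitivity ((C1 ^+ 2 - 1) / (1 + C1)); first by field.
  by rewrite -S2E; field.
rewrite TE in Mn0 *.
apply/matrixP => i j; rewrite !mxE.
have An0 : C1 * C2 * c ^+ 2 + S1 * (S2 * m) != 0.
  apply: contraNneq Mn0 => E.
  have -> : C2 * (C1 * - c ^+ 2 + S1 * 0) +
    S2 * (0 + m / c ^+ 2 * (S1 * - c ^+ 2 + S1 ^+ 2 / (1 + C1) * 0))
     = - (C1 * C2 * c ^+ 2 + S1 * (S2 * m)).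
    by field; rewrite C1n gt_eqF.
  by rewrite oppr_eq0; apply/eqP; exact: E.
field.
have -> : C2 * (C1 * - c ^+ 2) * (c ^+ 2 * (1 + C1)) +
      S2 * (m * (S1 * - c ^+ 2 * (1 + C1))) = - (c ^+ 2 * (1 + C1)) * (C1 * C2 * c ^+ 2 + S1 * (S2 * m)) by ring.
have Xn : - (c ^+ 2 * (1 + C1)) != 0 by rewrite oppr_eq0 mulf_neq0 // expf_neq0 // gt_eqF.
by rewrite An0 C1n (gt_eqF C1p) (gt_eqF C2p) (gt_eqF hc) mulf_neq0.
Qed.
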